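(* For every $n\ge 0$ and every $2^n$-mode raw LOPP-circuit $C$, $$[\![D(C)]\!]\circ\mathfrak G_n=\mathfrak G_n\circ[\![C]\!].$$
   Context: Raw LOPP-circuits. These are terms generated from $\mathrm{ph}(\varphi)$ ($1$ mode), $\mathrm{bs}(\theta)$ ($2$ modes), $\mathrm{id}$ ($1$ mode), $\mathrm{sw}$ ($2$ modes) and the empty circuit ($0$ modes), combined by $\circ$ (same number of modes) and $\otimes$ (stacking, the first factor on top). Their semantics $[\![C]\!]$ is a matrix on $\mathbb C^m$ ($m$ modes), with $[\![C_2\circ C_1]\!]=[\![C_2]\!][\![C_1]\!]$, $[\![C_1\otimes C_2]\!]=[\![C_1]\!]\oplus[\![C_2]\!]$, and: - $[\![\mathrm{ph}(\varphi)]\!]=(e^{i\varphi})$; - $[\![\mathrm{bs}(\theta)]\!]=\begin{pmatrix}\cos\theta&i\sin\theta\\i\sin\theta&\cos\theta\end{pmatrix}$; - $[\![\mathrm{sw}]\!]=\begin{pmatrix}0&1\\1&0\end{pmatrix}$; - $[\![\mathrm{id}]\!]=(1)$. Gray code. $G_0(0)=\epsilon$, and $G_n(k)=0G_{n-1}(k)$ if $k<2^{n-1}$, while $G_n(k)=1G_{n-1}(2^n-1-k)$ if $k\ge2^{n-1}$. The map $\mathfrak G_n:\mathbb C^{2^n}\to\mathbb C^{\{0,1\}^n}$ is $|k\rangle\mapsto|G_n(k)\rangle$. For $0\le k\le 2^n-2$, define bit strings $x_{k,n},y_{k,n}$ as follows: - if $k=2j$, then $x_{k,n}=G_{n-1}(j)$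 and $y_{k,n}=\epsilon$; - if $k=2j+1$, write $G_n(k)=w\,a\,1\,0^q$ with $q\in\{0,\dots,n-2\}$, $a\in\{0,1\}$, $w\in\{0,1\}^{n-q-2}$, and set $x_{k,n}=w$ and $y_{k,n}=10^q$. Controlled operators. For bit strings $x,y$ with $|x|+|y|=n-1$ and a $2\times2$ matrix $A$, let $\Lambda^x_yA$ be the operator on $\mathbb C^{\{0,1\}^n}$ with $$\Lambda^x_yA\,|u,a,v\rangle=\begin{cases}|u\rangle\otimes A|a\rangle\otimes|v\rangle&\text{if }uv=xy,\\ |u,a,v\rangle&\text{otherwise},\end{cases}$$ where $|u|=|x|$ and $|v|=|y|$. For $z\in\{0,1\}^n$, let $\Lambda^z s(\varphi)$ multiply $|z\rangle$ by $e^{i\varphi}$ and fix every other basis vector. Decoding semantics. For a raw LOPP-circuit $C$ on $\ell$ modes and $k$ with $k+\ell\le2^n$, define an operator $[\![D_{k,n}(C)]\!]$ on $\mathbb C^{\{0,1\}^n}$ inductively: - $[\![D_{k,n}(C_1\otimes C_2)]\!]=[\![D_{k+\ell_1,n}(C_2)]\!]\,[\![D_{k,n}(C_1)]\!]$, where $C_1$ has $\ell_1$ modes; - $[\![D_{k,n}(C_2\circ C_1)]\!]=[\![D_{k,n}(C_2)]\!]\,[\![D_{k,n}(C_1)]\!]$; - $\mathrm{id}$ and the empty circuit give the identity; - $[\![D_{k,n}(\mathrm{ph}(\varphi))]\!]=\Lambda^{G_n(k)}s(\varphi)$; - $[\![D_{k,n}(\mathrm{sw})]\!]=\Lambda^{x_{k,n}}_{y_{k,n}}X$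 with $X=\begin{pmatrix}0&1\\1&0\end{pmatrix}$; - $[\![D_{k,n}(\mathrm{bs}(\theta))]\!]=\Lambda^{x_{k,n}}_{y_{k,n}}R_X(-2\theta)$, where $R_X(\alpha)=\begin{pmatrix}\cos\frac\alpha2&-i\sin\frac\alpha2\\-i\sin\frac\alpha2&\cos\frac\alpha2\end{pmatrix}$. Finally $[\![D(C)]\!]:=[\![D_{0,n}(C)]\!]$. This is the semantics of the decoded quantum circuit $D(C)$. *)

(* Defs.v *)
From HB Require Import structures.
From mathcomp Require Import all_boot all_order all_algebra.
From mathcomp Require Import reals trigo.
From mathcomp Require Import complex.
Set Implicit Arguments. Unset Strict Implicit. Unset Printing Implicit Defensive.
Import Order.TTheory GRing.Theory Num.Theory.
Local Open Scope ring_scope.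

Section LOPP.
Variable R : realType.
Local Notation C := R[i].

Definition expi (phi : R) : C := (cos phi +i* sin phi)%C.

Inductive circ : nat -> Type :=
| Ph : R -> circ 1
| Bs : R -> circ 2
| Idc : circ 1
| Sw : circ 2
| Empty : circ 0
| Comp : forall m, circ m -> circ m -> circ m
| Tens : forall m1 m2, circ m1 -> circ m2 -> circ (m1 + m2).
    (* Tens C1 C2 denotes C1 \otimes C2, C1 on top *)

Definition bs_mx (theta : R) : 'M[C]_2 :=
  \matrix_(i < 2, j < 2)
    (if i == j then (cos theta +i* 0)%C else (0 +i* sin theta)%C).

Definition sw_mx : 'M[C]_2 := \matrix_(i < 2, j < 2) (i != j)%:R.

Fixpoint sem m (c : circ m) : 'M[C]_m :=
  match c in circ m return 'M[C]_m with
  | Ph phi => (expi phi)%:M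
  | Bs theta => bs_mx theta
  | Idc => 1%:M
  | Sw => sw_mx
  | Empty => 1%:M
  | @Comp _ c2 c1 => sem c2 *m sem c1
  | @Tens _ _ c1 c2 => block_mx (sem c1) 0 0 (sem c2)
  end.

(* bit strings are seq bool, written left to right; false = 0, true = 1 *)
Fixpoint gray (n k : nat) : seq bool :=
  match n with
  | 0 => [::]
  | n'.+1 => if (k < 2 ^ n')%N then false :: gray n' k
             else true :: gray n' (2 ^ n - 1 - k)
  end.

(* x_{k,n} and y_{k,n}.  For k odd, G_n(k) = w a 1 0^q where q is the number
   of trailing zeros (index of the last 1 counted from the right). *)
Definition trail0 (s : seq bool) : nat := index true (rev s).

Definition xkn (k n : nat) : seq bool :=
  if ~~ odd k then gray n.-1 k./2
  else take (n - trail0 (gray n k) - 2) (gray n k).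

Definition ykn (k n : nat) : seq bool :=
  if ~~ odd k then [::]
  else true :: nseq (trail0 (gray n k)) false.

(* An operator from C^I to C^J is given by its matrix J -> I -> C
   (entry (z, w) = <z| A |w>). *)
Definition op (I J : finType) := J -> I -> C.

Definition opcomp (I J K : finType) (A : op J K) (B : op I J) : op I K :=
  fun z w => \sum_(u : J) A z u * B u w.

Definition opid (I : finType) : op I I := fun z w => (z == w)%:R.

Notation qstate n := (n.-tuple bool).

Definition bit2 (b : bool) : 'I_2 := if b then ord_max else ord0.

(* Lambda^x_y A : |u,a,v> -> |u> (A|a>) |v> if uv = xy, identity otherwise *)
Definition ctrl (n : nat) (x y : seq bool) (A : 'M[C]_2)
  : op (qstate n) (qstate n) :=
  fun z w =>
    let p := size x in
    let u := take p w in let v := drop p.+1 w in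
    if u ++ v == x ++ y then
      (if (take p z == u) && (drop p.+1 z == v)
       then A (bit2 (nth false z p)) (bit2 (nth false w p)) else 0)
    else (z == w)%:R.

Definition cphase (n : nat) (s : seq bool) (phi : R) : op (qstate n) (qstate n) :=
  fun z w => if z == w then (if val w == s then expi phi else 1) else 0.

Definition X_mx : 'M[C]_2 := \matrix_(i < 2, j < 2) (i != j)%:R.

Definition RX (alpha : R) : 'M[C]_2 :=
  \matrix_(i < 2, j < 2)
    (if i == j then (cos (alpha / 2) +i* 0)%C else (0 +i* (- sin (alpha / 2)))%C).

Fixpoint Dsem (n : nat) m (k : nat) (c : circ m) : op (qstate n) (qstate n) :=
  match c with
  | Ph phi => @cphase n (gray n k) phi
  | Bs theta => @ctrl n (xkn k n) (ykn k n) (RX (- (2 * theta)))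
  | Idc => @opid _
  | Sw => @ctrl n (xkn k n) (ykn k n) X_mx
  | Empty => @opid _
  | @Comp _ c2 c1 => @opcomp _ _ _ (@Dsem n _ k c2) (@Dsem n _ k c1)
  | @Tens m1 _ c1 c2 => @opcomp _ _ _ (@Dsem n _ (k + m1) c2) (@Dsem n _ k c1)
  end.

Definition D (n : nat) m (c : circ m) := @Dsem n m 0%N c.

Definition grayop (n : nat) : op 'I_(2 ^ n) (qstate n) :=
  fun z k => (val z == gray n k)%:R.

Definition mxop m (A : 'M[C]_m) : op 'I_m 'I_m := fun i j => A i j.

End LOPP.

Arguments D {R} n {m} c.
Arguments grayop : clear implicits.

(* Main.v *)
Require Import Defs.
From mathcomp Require Import all_boot all_order all_algebra.
From mathcomp Require Import reals trigo complex.
From mathcomp Require Import zify ring lra.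
From Stdlib Require Import FunctionalExtensionality.

Section Helpers.
Set Implicit Arguments. Unset Strict Implicit. Unset Printing Implicit Defensive.

Lemma gray_size n k : size (gray n k) = n.
Proof. by elim: n k => //= n IH k; case: ifP => _ /=; rewrite IH. Qed.

Lemma grayS n k : gray n.+1 k =
  if k < 2 ^ n then false :: gray n k else true :: gray n (2 ^ n.+1 - 1 - k).
Proof. by []. Qed.

Lemma gray0 n : gray n 0 = nseq n false.
Proof. by elim: n => //= n ->; rewrite expn_gt0. Qed.

Lemma grayT n : gray n.+1 (2 ^ n.+1 - 1) = true :: nseq n false.
Proof.
rewrite /= ifF; last by apply/negbTE; rewrite -leqNgt expnS; have := expn_gt0 2 n; lia.
by rewrite subnn gray0.
Qed.

Lemma gray_inj n a b : a < 2 ^ n -> b < 2 ^ n -> gray n a = gray n b -> a = b.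
Proof.
elim: n a b => [|n IH] a b.
  by rewrite expn0 !ltnS !leqn0 => /eqP -> /eqP ->.
rewrite /= expnS => ha hb.
case: ifP => ha'; case: ifP => hb' // [] /IH.
- by apply.
- move=> H. have := H ltac:(lia) ltac:(lia). lia.
Qed.

Lemma odd_compl a b n : a + b = 2 ^ n.+1 -> odd a = odd b.
Proof.
move/(congr1 odd); rewrite oddD oddX /=.
by case: (odd a); case: (odd b).
Qed.

Lemma grayE n j : j < 2 ^ n ->
  gray n.+1 (2 * j) = rcons (gray n j) (odd j) /\
  gray n.+1 (2 * j).+1 = rcons (gray n j) (~~ odd j).
Proof.
elim: n j => [|n IH] j.
  by rewrite expn0 ltnS leqn0 => /eqP ->.
move=> hj.
have P : 0 < 2 ^ n by rewrite expn_gt0.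
rewrite (grayS n.+1 (2 * j)) (grayS n.+1 (2 * j).+1) (grayS n j).
case: (ltnP j (2 ^ n)) => hjn.
  rewrite ifT; last by rewrite expnS; lia.
  rewrite ifT; last by rewrite expnS; lia.
  by have [-> ->] := IH _ hjn.
rewrite ifF; last by apply/negbTE; rewrite -leqNgt expnS; lia.
rewrite ifF; last by apply/negbTE; rewrite -leqNgt expnS; lia.
have hj2 : j < 2 * 2 ^ n by rewrite -expnS.
set j' := 2 ^ n.+1 - 1 - j.
have hj' : j' < 2 ^ n by rewrite /j' expnS; lia.
have oj : odd j' = ~~ odd j.
  rewrite (@odd_compl j' j.+1 n) //.
  rewrite /j' expnS; lia.
have [E1 E2] := IH _ hj'.
have -> : 2 ^ n.+2 - 1 - 2 * j = (2 * j').+1 by rewrite /j' !expnS; lia.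
have -> : 2 ^ n.+2 - 1 - (2 * j).+1 = 2 * j' by rewrite /j' !expnS; lia.
by rewrite E1 E2 oj negbK.
Qed.

Lemma grayO n k : odd k -> k.+1 < 2 ^ n -> exists s a q,
  gray n k = s ++ [:: a, true & nseq q false] /\
  gray n k.+1 = s ++ [:: ~~ a, true & nseq q false].
Proof.
elim: n k => [|n IH] k ok hk; first by move: hk; rewrite expn0; lia.
have P : 0 < 2 ^ n by rewrite expn_gt0.
have hk2 : k.+1 < 2 * 2 ^ n by rewrite -expnS.
rewrite (grayS n k) (grayS n k.+1).
case: (ltnP k.+1 (2 ^ n)) => h1.
  rewrite ifT; last by lia.
  have [s [a [q [E1 E2]]]] := IH k ok h1.
  by exists (false :: s), a, q; rewrite E1 E2.
case: (ltnP k (2 ^ n)) => h2.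
  move: IH P h1 h2 hk2 hk; case: n => [|n] IH P h1 h2 hk2 hk.
    by move: h2 ok; rewrite expn0 ltnS leqn0 => /eqP ->.
  have Ek : k = 2 ^ n.+1 - 1 by lia.
  have -> : 2 ^ n.+2 - 1 - k.+1 = 2 ^ n.+1 - 1 by rewrite expnS; lia.
  rewrite Ek grayT.
  by exists [::], false, n.
rewrite /=.
set k' := 2 ^ n.+1 - 2 - k.
have ok' : odd k'.
  rewrite (@odd_compl k' k.+2 n) /= ?ok //.
  rewrite /k' expnS; lia.
have hk' : k'.+1 < 2 ^ n by rewrite /k' expnS; lia.
have [s [a [q [E1 E2]]]] := IH k' ok' hk'.
have -> : 2 ^ n.+1 - 1 - k = k'.+1 by rewrite /k' expnS; lia.
have -> : 2 ^ n.+1 - 1 - k.+1 = k' by rewrite /k' expnS; lia.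
by exists (true :: s), (~~ a), q; rewrite E1 E2 negbK.
Qed.

Lemma trail0E (t : seq bool) q : trail0 (t ++ true :: nseq q false) = q.
Proof.
rewrite /trail0 rev_cat rev_cons rev_nseq -cats1 -catA index_cat.
rewrite mem_nseq andbF /= size_nseq.
by rewrite addn0.
Qed.

Lemma trail0E' (s : seq bool) a q : trail0 (s ++ [:: a, true & nseq q false]) = q.
Proof. by have := trail0E (rcons s a) q; rewrite -cats1 -catA. Qed.

Lemma grayXY n k : k.+2 <= 2 ^ n -> exists x y b,
  [/\ gray n k = x ++ b :: y, gray n k.+1 = x ++ ~~ b :: y,
      xkn k n = x & ykn k n = y].
Proof.
move=> hk.
case ok: (odd k).
  have [s [a [q [E1 E2]]]] := grayO ok hk.
  exists s, (true :: nseq q false), a; split => //.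
    rewrite /xkn ok /= E1.
    have := gray_size n k; rewrite E1 size_cat /= size_nseq => hs.
    have -> : (n - trail0 (s ++ [:: a, true & nseq q false]) - 2) = size s.
      by rewrite trail0E'; lia.
    by rewrite take_size_cat.
  by rewrite /ykn ok /= E1 trail0E'.
move: hk; case: n => [|n] hk; first by move: hk; rewrite expn0.
have Ek : k = 2 * k./2.
  by have := odd_double_half k; rewrite ok add0n -mul2n.
have hj : k./2 < 2 ^ n by move: hk; rewrite expnS; lia.
have [E1 E2] := grayE hj.
exists (gray n k./2), [::], (odd k./2); split.
- by rewrite {1}Ek E1 cats1.
- by rewrite {1}Ek E2 cats1.
- by rewrite /xkn ok.
- by rewrite /ykn ok.
Qed.
Import Order.TTheory GRing.Theory Num.Theory.
Local Open Scope ring_scope.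

Lemma split_seq (s : seq bool) p : (p < size s)%N -> s = take p s ++ nth false s p :: drop p.+1 s.
Proof. by move=> h; rewrite -drop_nth // cat_take_drop. Qed.

Lemma bit2_eq b c : (bit2 b == bit2 c) = (b == c).
Proof. by case: b; case: c. Qed.

Lemma ctrl_base (R : realType) n k (x y : seq bool) b (A M : 'M[R[i]]_2) (f : bool -> R[i]) :
  (forall i j, A i j = f (i == j)) -> (forall i j : 'I_2, M i j = f (i == j)) ->
  (size x + (size y).+1 = n)%N -> gray n k = x ++ b :: y -> gray n k.+1 = x ++ ~~ b :: y ->
  (forall (z w : n.-tuple bool) (j : 'I_2), (w : seq bool) = gray n (k + j)%N ->
      ctrl x y A z w = \sum_(i < 2) ((z : seq bool) == gray n (k + i)%N)%:R * M i j) /\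
  (forall (z w : n.-tuple bool), (forall j : 'I_2, (w : seq bool) != gray n (k + j)%N) ->
      ctrl x y A z w = (z == w)%:R).
Proof.
move=> hA hM hn E0 E1.
have decomp (t : n.-tuple bool) : exists t1 c t2, (t : seq bool) = t1 ++ c :: t2 /\ size t1 = size x
    /\ size t2 = size y.
  exists (take (size x) t), (nth false t (size x)), (drop (size x).+1 t).
  rewrite -split_seq ?size_tuple; last by lia.
  by split => //; split; lia.
have key (t : n.-tuple bool) t1 c t2 : (t : seq bool) = t1 ++ c :: t2 -> size t1 = size x ->
   [/\ take (size x) t = t1, nth false t (size x) = c & drop (size x).+1 t = t2].
  move=> -> h1; rewrite -h1 take_size_cat // nth_cat ltnn subnn /=.
  by rewrite -cat_rcons drop_size_cat // size_rcons.
split.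
- move=> z w j Ew.
  rewrite !big_ord_recl big_ord0 addr0 /=.
  rewrite addn0 addn1 E0 E1.
  have [c [Ewc Mc]] : exists c : bool, (w : seq bool) = (x ++ c :: y)%SEQ /\
      forall i : 'I_2, M i j = f ((i == ord0) == (c == b)).
    case: j Ew => [[|[|//]]] hj Ew.
      exists b; split; first by rewrite Ew addn0 E0.
      by move=> i; rewrite hM eqxx; case: i => [[|[|//]]].
    exists (~~ b); split; first by rewrite Ew addn1 E1.
    move=> i; rewrite hM; case: i => [[|[|//]]] hi /=.
      by congr f; rewrite -!val_eqE /=; destruct b.
    by congr f; rewrite -!val_eqE /=; destruct b.
  rewrite /ctrl.
  have [-> -> ->] := key w x c y Ewc erefl.
  have [z1 [cz [z2 [Ez [s1 s2]]]]] := decomp z.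
  have [-> -> ->] := key z _ _ _ Ez s1.
  rewrite eqxx Ez !eqseq_cat // !eqseq_cons hA bit2_eq !Mc.
  move: Ewc Ez; case: (z1 == x); case: (z2 == y); destruct cz, c, b => _ _;
    rewrite /= ?mul1r ?mul0r ?addr0 ?add0r.
  all: try done.
move=> z w Hw.
rewrite /ctrl.
have [w1 [cw [w2 [Ew [s1 s2]]]]] := decomp w.
have [-> _ ->] := key w _ _ _ Ew s1.
rewrite eqseq_cat //.
case: eqP => [e1|] //=; case: eqP => [e2|] //=.
exfalso.
case: (boolP (cw == b)) => /eqP hc.
  by have := Hw ord0; rewrite addn0 E0 Ew e1 e2 hc eqxx.
have := Hw (lift ord0 ord0); rewrite /= addn1 E1 Ew e1 e2.
by destruct cw, b => //; rewrite eqxx.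
Qed.


Definition gtup n k : n.-tuple bool := @Tuple n bool (gray n k) (introT eqP (gray_size n k)).

Lemma pick_sum (R : realType) n (F : n.-tuple bool -> R[i]) (u0 : n.-tuple bool) (g : seq bool) :
  (u0 : seq bool) = g -> \sum_(u : n.-tuple bool) F u * ((u : seq bool) == g)%:R = F u0.
Proof.
move=> <-; rewrite (bigD1 u0) //= eqxx mulr1 big1 ?addr0 // => u /negbTE hu.
by rewrite val_eqE hu mulr0.
Qed.

Lemma pick_sum' (R : realType) n (F : n.-tuple bool -> R[i]) (u0 : n.-tuple bool) :
  \sum_(u : n.-tuple bool) F u * (u == u0)%:R = F u0.
Proof.
rewrite (bigD1 u0) //= eqxx mulr1 big1 ?addr0 // => u /negbTE hu.
by rewrite hu mulr0.
Qed.

Lemma gray_neq n a b : (a < 2 ^ n)%N -> (b < 2 ^ n)%N -> a <> b -> gray n a != gray n b.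
Proof. by move=> ha hb hab; apply/eqP => /gray_inj => /(_ ha hb). Qed.

Lemma gen (R : realType) n m (c : circ R m) : forall k, (k + m <= 2 ^ n)%N ->
  (forall (z w : n.-tuple bool) (j : 'I_m), (w : seq bool) = gray n (k + j)%N ->
     Dsem (n:=n) k c z w = \sum_(i < m) ((z : seq bool) == gray n (k + i)%N)%:R * sem c i j) /\
  (forall z w : n.-tuple bool, (forall j : 'I_m, (w : seq bool) != gray n (k + j)%N) ->
     Dsem (n:=n) k c z w = (z == w)%:R).
Proof.
elim: m / c => [phi|theta||||m c2 IH2 c1 IH1|m1 m2 c1 IH1 c2 IH2] k hk.
- split.
    move=> z w j Ew; rewrite [j]ord1 big_ord1 addn0 in Ew *.
    have Ew' : \val w = gray n k := Ew.
    rewrite /= /cphase mxE Ew' eqxx (_ : (ord0 == 0 :> 'I_1) = true) // mulr1n -Ew val_eqE.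
    by case: (z == w); rewrite ?mul1r ?mul0r.
  move=> z w Hw; rewrite /= /cphase.
  by have := Hw ord0; rewrite addn0 => /negbTE ->; case: (z == w).
- have hk' : (k.+2 <= 2 ^ n)%N by rewrite -addn2.
  have [x [y [b [E0 E1 Ex Ey]]]] := grayXY hk'.
  rewrite /= Ex Ey.
  apply: (@ctrl_base R n k x y b _ _ (fun t => if t then (cos theta +i* 0)%C else (0 +i* sin theta)%C) _ _ _ E0 E1).
  + move=> i j; rewrite /RX mxE.
    have -> : - (2 * theta) / 2 = - theta.
      by rewrite mulNr mulrC mulKf // pnatr_eq0.
    by rewrite cosN sinN opprK.
  + by move=> i j; rewrite /bs_mx mxE.
  + by have := gray_size n k; rewrite E0 size_cat.
- split.
    move=> z w j Ew; rewrite [j]ord1 big_ord1 addn0 in Ew *.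
    by rewrite /= /opid mxE eqxx mulr1n mulr1 -Ew val_eqE.
  by [].
- have hk' : (k.+2 <= 2 ^ n)%N by rewrite -addn2.
  have [x [y [b [E0 E1 Ex Ey]]]] := grayXY hk'.
  rewrite /= Ex Ey.
  apply: (@ctrl_base R n k x y b _ _ (fun t => (~~ t)%:R) _ _ _ E0 E1).
  + by move=> i j; rewrite /X_mx mxE.
  + by move=> i j; rewrite /sw_mx mxE.
  + by have := gray_size n k; rewrite E0 size_cat.
- by split => // z w [].
- have [A1 B1] := IH1 k hk; have [A2 B2] := IH2 k hk.
  split.
    move=> z w j Ew; rewrite /= /opcomp.
    have -> : \sum_u Dsem (n:=n) k c2 z u * Dsem (n:=n) k c1 u w =
      \sum_u \sum_(i < m) Dsem (n:=n) k c2 z u * (((u : seq bool) == gray n (k + i)%N)%:R * sem c1 i j).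
      by apply: eq_bigr => u _; rewrite (A1 u w j Ew) mulr_sumr.
    rewrite exchange_big /=.
    under eq_bigr => i _.
      under eq_bigr => u _ do rewrite mulrA.
      rewrite -mulr_suml (pick_sum (u0 := gtup n (k + i)%N) (fun u => Dsem (n:=n) k c2 z u)) //.
      rewrite (A2 z (gtup n (k + i)%N) i) // mulr_suml.
    over.
    rewrite exchange_big /=; apply: eq_bigr => l _.
    rewrite mxE mulr_sumr; apply: eq_bigr => i _.
    by rewrite mulrA.
  move=> z w Hw; rewrite /= /opcomp.
  under eq_bigr => u _ do rewrite (B1 u w Hw).
  by rewrite pick_sum' B2.
- have hk1 : (k + m1 <= 2 ^ n)%N by lia.
  have hk2 : (k + m1 + m2 <= 2 ^ n)%N by lia.
  have [A1 B1] := IH1 k hk1; have [A2 B2] := IH2 (k + m1)%N hk2.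
  have inj (i : 'I_m1) (l : 'I_m2) : gray n (k + i)%N != gray n (k + m1 + l)%N.
    by apply: gray_neq; have := ltn_ord i; have := ltn_ord l; lia.
  split.
    move=> z w j Ew; rewrite /= /opcomp.
    rewrite -(splitK j) in Ew *; case: (split j) => [j1|j2] /= in Ew *.
      have -> : \sum_u Dsem (n:=n) (k + m1)%N c2 z u * Dsem (n:=n) k c1 u w =
        \sum_u \sum_(i < m1) Dsem (n:=n) (k + m1)%N c2 z u *
            (((u : seq bool) == gray n (k + i)%N)%:R * sem c1 i j1).
        by apply: eq_bigr => u _; rewrite (A1 u w j1 Ew) mulr_sumr.
      rewrite exchange_big /=.
      under eq_bigr => i _.
        under eq_bigr => u _ do rewrite mulrA.
        rewrite -mulr_suml (pick_sum (u0 := gtup n (k + i)%N)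
                               (fun u => Dsem (n:=n) (k + m1)%N c2 z u)) //.
        rewrite (B2 z (gtup n (k + i)%N)); last by move=> l; apply: inj.
      over.
      rewrite big_split_ord /= [X in _ = _ + X]big1 ?addr0; last first.
        by move=> l _; rewrite block_mxEdl mxE mulr0.
      apply: eq_bigr => i _.
      by rewrite block_mxEul -val_eqE.
    have Ew' : (w : seq bool) = gray n (k + m1 + j2)%N by rewrite Ew addnA.
    have -> : \sum_u Dsem (n:=n) (k + m1)%N c2 z u * Dsem (n:=n) k c1 u w =
        \sum_u Dsem (n:=n) (k + m1)%N c2 z u * (u == w)%:R.
      apply: eq_bigr => u _; rewrite (B1 u w) // => i.
      by rewrite Ew'; apply/negP => /eqP E; move: (inj i j2); rewrite E eqxx.
    rewrite pick_sum' (A2 z w j2 Ew').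
    rewrite big_split_ord /= [X in _ = X + _]big1 ?add0r; last first.
      by move=> i _; rewrite block_mxEur mxE mulr0.
    apply: eq_bigr => l _.
    by rewrite block_mxEdr addnA.
  move=> z w Hw; rewrite /= /opcomp.
  have -> : \sum_u Dsem (n:=n) (k + m1)%N c2 z u * Dsem (n:=n) k c1 u w =
      \sum_u Dsem (n:=n) (k + m1)%N c2 z u * (u == w)%:R.
    apply: eq_bigr => u _; rewrite (B1 u w) // => i.
    by have := Hw (lshift m2 i).
  rewrite pick_sum' B2 // => l.
  by have := Hw (rshift m1 l); rewrite /= addnA.
Qed.
End Helpers.

Theorem mainTheorem6 (R : realType) (n : nat) (c : circ R (2 ^ n)) :
  opcomp (D n c) (grayop R n) = opcomp (grayop R n) (mxop (sem c)).
Proof.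
apply: functional_extensionality => z; apply: functional_extensionality => j.
rewrite /opcomp /grayop /mxop /D.
have := @gen R n _ c 0; case => [|A _]; first by rewrite add0n.
rewrite (pick_sum (u0 := gtup n j) (fun u => Dsem (n:=n) 0 c z u)) //.
rewrite (A z (gtup n j) j) //.
Qed.
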